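(* Let $\mathbb{A}=(\mathbb{L},\Box_s,\Diamond_s,\Box_\ell,\Diamond_\ell)$ be an abstract Kent algebra. Then: (i) $\mathbb{A}$ satisfies, for all $a,b$, ''$\Box_\ell a\le\Box_\ell b$ and $\Diamond_\ell a\le\Diamond_\ell b$ imply $a\le b$'' if and only if $a\wedge\Box_\ell b\le\Diamond_\ell a\vee b$ for all $a,b\in\mathbb{L}$; (ii) $\mathbb{A}$ satisfies, for all $a,b$, ''$\Box_s a\le\Box_s b$ and $\Diamond_s a\le\Diamond_s b$ imply $a\le b$'' if and only if $a\wedge\Diamond_s b\le\Box_s a\vee b$ for all $a,b\in\mathbb{L}$.
   Context: An abstract Kent algebra (aKa) is a structure $(\mathbb{L},\Box_s,\Diamond_s,\Box_\ell,\Diamond_\ell)$ where $\mathbb{L}$ is a lattice and the four unary operations satisfy, for all $a,b$: $\Diamond_s a\le b\iff a\le\Box_s b$; $\Diamond_\ell a\le b\iff a\le\Box_\ell b$; $\Box_s a\le a$, $a\le\Diamond_s a$, $a\le\Box_\ell a$, $\Diamond_\ell a\le a$; $\Box_s a\le\Box_s\Box_s a$, $\Diamond_s\Diamond_s a\le\Diamond_s a$, $\Box_\ell\Box_\ell a\le\Box_\ell a$, $\Diamond_\ell a\le\Diamond_\ell\Diamond_\ell a$. An aKa satisfying the quasi-inequality in (i) is called a K-IA3$_\ell$; one satisfying the quasi-inequality in (ii) is called a K-IA3$_s$. *)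

(* Defs.v *)
From HB Require Import structures.
From mathcomp Require Import all_boot all_order.
Set Implicit Arguments. Unset Strict Implicit. Unset Printing Implicit Defensive.
Import Order.TTheory.
Local Open Scope order_scope.

(* Abstract Kent algebra: a lattice L with four unary operations
   bs = Box_s, ds = Diamond_s, bl = Box_l, dl = Diamond_l. *)
Definition is_aKa (d : Order.disp_t) (L : latticeType d)
    (bs ds bl dl : L -> L) : Prop :=
  [/\ (forall a b : L, (ds a <= b) <-> (a <= bs b)),
      (forall a b : L, (dl a <= b) <-> (a <= bl b)),
      (forall a : L, [/\ bs a <= a, a <= ds a, a <= bl a & dl a <= a]) &
      (forall a : L, [/\ bs a <= bs (bs a), ds (ds a) <= ds a,
                        bl (bl a) <= bl a & dl a <= dl (dl a)])].

Definition K_IA3_l (d : Order.disp_t) (L : latticeType d) (bl dl : L -> L) : Prop :=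
  forall a b : L, bl a <= bl b -> dl a <= dl b -> a <= b.

Definition K_IA3_s (d : Order.disp_t) (L : latticeType d) (bs ds : L -> L) : Prop :=
  forall a b : L, bs a <= bs b -> ds a <= ds b -> a <= b.

(* Main.v *)
Require Import Defs.
From HB Require Import structures.
From mathcomp Require Import all_boot all_order.
Import Order.TTheory.
Local Open Scope order_scope.

Section Aux.
Variables (d : Order.disp_t) (L : latticeType d) (b f : L -> L).
Hypothesis adj : forall x y : L, (f x <= y) <-> (x <= b y).
Lemma monoL x y : x <= y -> f x <= f y.
Proof. move=> h; apply/adj; apply: (le_trans h); apply/adj; exact: lexx. Qed.
Lemma monoR x y : x <= y -> b x <= b y.
Proof. move=> h; apply/adj; apply: le_trans h; apply/adj; exact: lexx. Qed.
End Aux.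

Theorem mainTheorem6 (d : Order.disp_t) (L : latticeType d)
    (bs ds bl dl : L -> L) (HA : is_aKa bs ds bl dl) :
  (K_IA3_l bl dl <-> (forall a b : L, a `&` bl b <= dl a `|` b)) /\
  (K_IA3_s bs ds <-> (forall a b : L, a `&` ds b <= bs a `|` b)).
Proof.
case: HA => As Al Ax Ai.
have mdl := @monoL _ _ _ _ Al; have mbl := @monoR _ _ _ _ Al.
have mds := @monoL _ _ _ _ As; have mbs := @monoR _ _ _ _ As.
split; split.
- move=> Q a b; apply: Q.
  + apply: le_trans (mbl _ _ (leUr _ _)).
    apply: le_trans (mbl _ _ (leIr _ _)) _.
    by case: (Ai b).
  + apply: le_trans (mdl _ _ (leUl _ _)).
    apply: le_trans (mdl _ _ (leIl _ _)) _.
    by case: (Ai a).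
- move=> H a b h1 h2.
  have e1 : a <= a `&` bl b.
    by rewrite lexI lexx /=; apply: le_trans h1; case: (Ax a).
  apply: (le_trans e1); apply: (le_trans (H a b)).
  by rewrite leUx lexx andbT; apply: (le_trans h2); case: (Ax b).
- move=> Q a b; apply: Q.
  + apply: le_trans (mbs _ _ (leUl _ _)).
    apply: le_trans (mbs _ _ (leIl _ _)) _.
    by case: (Ai a).
  + apply: le_trans (mds _ _ (leUr _ _)).
    apply: le_trans (mds _ _ (leIr _ _)) _.
    by case: (Ai b).
- move=> H a b h1 h2.
  have e1 : a <= a `&` ds b.
    by rewrite lexI lexx /=; apply: le_trans h2; case: (Ax a).
  apply: (le_trans e1); apply: (le_trans (H a b)).
  by rewrite leUx lexx andbT; apply: (le_trans h1); case: (Ax b).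
Qed.
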